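(* Let $\pi_k$ be the current policy, let $\pi$ be any policy, and let $\pi_{k-i}$, $i=0,1,2,\ldots$, be prior policies. Let $\nu$ be any mixture distribution over prior policies, with $0\le\nu_i\le1$ the probability of using $\pi_{k-i}$ as reference policy and $\sum_i\nu_i=1$; write $\mathbb E_{i\sim\nu}[\cdot]$ for the corresponding expectation. Then $$J(\pi)-J(\pi_k)\;\ge\;\frac{1}{1-\gamma}\,\mathbb E_{i\sim\nu}\!\left[\mathbb E_{(s,a)\sim d^{\pi_{k-i}}}\!\left[\frac{\pi(a\mid s)}{\pi_{k-i}(a\mid s)}A^{\pi_k}(s,a)\right]\right]\;-\;\frac{2\gamma C^{\pi,\pi_k}}{(1-\gamma)^2}\,\mathbb E_{i\sim\nu}\!\left[\mathbb E_{s\sim d^{\pi_{k-i}}}\big[\mathrm{TV}(\pi,\pi_{k-i})(s)\big]\right],$$ where $C^{\pi,\pi_k}=\max_{s\in\mathcal S}\big|\mathbb E_{a\sim\pi(\cdot\mid s)}[A^{\pi_k}(s,a)]\big|$.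
   Context: We work with an infinite-horizon discounted Markov decision process $(\mathcal S,\mathcal A,p,r,\rho_0,\gamma)$ with state space $\mathcal S$, action space $\mathcal A$, transition kernel $p(\cdot\mid s,a)$, reward $r:\mathcal S\times\mathcal A\to\mathbb R$, initial state distribution $\rho_0$, and discount $\gamma\in[0,1)$. A (stationary) policy $\pi$ maps each state $s$ to a distribution $\pi(\cdot\mid s)$ over actions. The objective is $J(\pi)=\mathbb E_{\tau\sim\pi}[\sum_{t=0}^\infty\gamma^t r(s_t,a_t)]$, where trajectories are generated by $s_0\sim\rho_0$, $a_t\sim\pi(\cdot\mid s_t)$, $s_{t+1}\sim p(\cdot\mid s_t,a_t)$. The normalized discounted state visitation distribution is $d^{\pi}(s)=(1-\gamma)\sum_{t=0}^\infty\gamma^t\,\mathbb P(s_t=s\mid\rho_0,\pi,p)$, and $d^{\pi}(s,a)=d^{\pi}(s)\pi(a\mid s)$. $V^{\pi}$, $Q^{\pi}$ are the discounted state and state-action value functions of $\pi$, and $A^{\pi}(s,a)=Q^{\pi}(s,a)-V^{\pi}(s)$ is the advantage function. $\mathrm{TV}(\pi,\pi')(s)$ is the total variation distance between $\pi(\cdot\mid s)$ and $\pi'(\cdot\mid s)$. *)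

(* Defs.v *)
From mathcomp Require Import all_boot all_order all_algebra.
From mathcomp Require Import all_classical all_reals all_analysis.
Set Implicit Arguments. Unset Strict Implicit. Unset Printing Implicit Defensive.
Import Order.TTheory GRing.Theory Num.Theory numFieldNormedType.Exports.
Local Open Scope ring_scope.

Section MDP.
Variables (R : realType) (S A : finType).

(* transition kernel p s a s' = p(s' | s, a); policy pi s a = pi(a | s) *)
Definition is_kernel (p : S -> A -> S -> R) :=
  (forall s a s', 0 <= p s a s') /\ (forall s a, \sum_(s' : S) p s a s' = 1).
Definition is_policy (pi : S -> A -> R) :=
  (forall s a, 0 <= pi s a) /\ (forall s, \sum_(a : A) pi s a = 1).
Definition is_distr (rho : S -> R) :=
  (forall s, 0 <= rho s) /\ \sum_(s : S) rho s = 1.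

Definition inf_sum (u : nat -> R) : R := limn (series u).

(* joint law of (s_t, a_t) under policy pi, dynamics p, initial law mu0 of (s_0,a_0) *)
Fixpoint marg (p : S -> A -> S -> R) (pi : S -> A -> R) (mu0 : S -> A -> R)
    (t : nat) : S -> A -> R :=
  match t with
  | 0 => mu0
  | t'.+1 => fun s' a' =>
      (\sum_(s : S) \sum_(a : A) marg p pi mu0 t' s a * p s a s') * pi s' a'
  end.

Definition disc_return p (r : S -> A -> R) gamma pi mu0 : R :=
  inf_sum (fun t => gamma ^+ t *
     \sum_(s : S) \sum_(a : A) marg p pi mu0 t s a * r s a).

Definition init_sa (rho : S -> R) (pi : S -> A -> R) : S -> A -> R :=
  fun s a => rho s * pi s a.

Definition J p r (rho0 : S -> R) gamma pi : R :=
  disc_return p r gamma pi (init_sa rho0 pi).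

Definition Vf p r gamma pi (s : S) : R :=
  disc_return p r gamma pi (init_sa (fun s' => if s' == s then 1 else 0) pi).

Definition Qf p r gamma pi (s : S) (a : A) : R :=
  disc_return p r gamma pi
    (fun s' a' => if (s' == s) && (a' == a) then 1 else 0).

Definition Adv p r gamma pi (s : S) (a : A) : R :=
  Qf p r gamma pi s a - Vf p r gamma pi s.

Definition dvis p (rho0 : S -> R) gamma pi (s : S) : R :=
  (1 - gamma) * inf_sum (fun t => gamma ^+ t *
     \sum_(a : A) marg p pi (init_sa rho0 pi) t s a).

Definition TV (pi pi' : S -> A -> R) (s : S) : R :=
  2^-1 * \sum_(a : A) `|pi s a - pi' s a|.

End MDP.

(* Main.v *)
Require Import Defs.
From mathcomp Require Import all_boot all_order all_algebra.
From mathcomp Require Import all_classical all_reals all_analysis.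
From mathcomp Require Import ring lra.
Import Order.TTheory GRing.Theory Num.Theory numFieldNormedType.Exports.
Local Open Scope classical_set_scope.
Local Open Scope ring_scope.

Set Implicit Arguments.
Section Ser.
Variable R : realType.
Implicit Types u v : nat -> R.

Definition hs u (l : R) := series u @ \oo --> l.

Lemma hs_inf u l : hs u l -> inf_sum u = l.
Proof. by move=> h; rewrite /inf_sum; apply: cvg_lim. Qed.

Lemma hs_shift u l : hs (fun t => u t.+1) l -> hs u (u 0%N + l).
Proof.
move=> h; rewrite /hs -cvg_shiftS.
have -> : [sequence series u n.+1]_n = (fun n => u 0%N + series (fun t => u t.+1) n).
  apply/funext => n /=; rewrite !seriesEord /= big_ord_recl //.
by apply: cvgD => //; apply: cvg_cst.
Qed.

Lemma hs_scale u l c : hs u l -> hs (fun t => c * u t) (c * l).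
Proof.
move=> h; rewrite /hs.
have -> : series (fun t => c * u t) = (fun n => c * series u n).
  by apply/funext => n; rewrite !seriesEord /= mulr_sumr.
exact: cvgMl_tmp.
Qed.

Lemma hs_add u v l m : hs u l -> hs v m -> hs (fun t => u t + v t) (l + m).
Proof.
move=> hu hv; rewrite /hs.
have -> : series (fun t => u t + v t) = (fun n => series u n + series v n).
  by apply/funext => n; rewrite !seriesEord /= big_split.
exact: cvgD.
Qed.

Lemma hs_ext u v l : (forall t, u t = v t) -> hs u l -> hs v l.
Proof. by move=> e; have -> : u = v by apply/funext. Qed.

Lemma hs_sum (I : Type) (s : seq I) (u : I -> nat -> R) (l : I -> R) :
  (forall i, hs (u i) (l i)) -> hs (fun t => \sum_(i <- s) u i t) (\sum_(i <- s) l i).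
Proof.
move=> h; elim: s => [|i s IH].
  rewrite big_nil; apply: (@hs_ext (fun=> 0)); first by move=> t; rewrite big_nil.
  rewrite /hs; have -> : series (fun=> (0:R)) = fun=> 0.
    by apply/funext => n; rewrite seriesEord /= big1.
  exact: cvg_cst.
rewrite big_cons; have := hs_add (h i) IH. apply: hs_ext => t; by rewrite big_cons.
Qed.

Lemma hs_geo u g M : 0 <= g -> g < 1 -> (forall t, `|u t| <= M) ->
  exists l, hs (fun t => g ^+ t * u t) l.
Proof.
move=> g0 g1 hM.
have cv : cvgn (series (fun t => g ^+ t * u t)).
  apply: normed_cvg.
  apply: (@series_le_cvg _ _ (geometric M g)).
  - by move=> n /=.
  - move=> n; rewrite /geometric /= mulr_ge0 ?exprn_ge0 //.
    exact: le_trans (hM 0%N).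
  - move=> n; rewrite /geometric /= normrM ger0_norm ?exprn_ge0 // mulrC.
    by rewrite ler_wpM2r ?exprn_ge0.
  - by apply: is_cvg_geometric_series; rewrite ger0_norm.
by exists (limn (series (fun t => g ^+ t * u t))).
Qed.
Lemma hs0 : hs (fun=> 0) 0.
Proof.
rewrite /hs; have -> : series (fun=> (0:R)) = fun=> 0.
  by apply/funext => n; rewrite seriesEord /= big1.
exact: cvg_cst.
Qed.

Lemma hs_le u v l m : (forall t, u t <= v t) -> hs u l -> hs v m -> l <= m.
Proof.
move=> uv hu hv; rewrite -(hs_inf hu) -(hs_inf hv).
apply: lim_series_le => //; [exact: (cvgP _ hu) | exact: (cvgP _ hv)].
Qed.

Lemma hs_ge0 u l : (forall t, 0 <= u t) -> hs u l -> 0 <= l.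
Proof. by move=> h; apply: hs_le h hs0. Qed.
End Ser.
Arguments hs {R}.
Arguments hs_sum {R I} s {u l}.
Arguments hs_shift {R u l}.

Lemma le_sum1 (R : realType) (I : finType) (F : I -> R) i :
  (forall j, 0 <= F j) -> F i <= \sum_j F j.
Proof. by move=> h; rewrite (bigD1 i) //= lerDl sumr_ge0. Qed.
Arguments le_sum1 {R I}.

Section MDP.
Variables (R : realType) (S A : finType) (p : S -> A -> S -> R) (r : S -> A -> R).
Hypothesis hp : is_kernel p.

Definition step (pi : S -> A -> R) (mu : S -> A -> R) : S -> A -> R :=
  fun s' a' => (\sum_(s : S) \sum_(a : A) mu s a * p s a s') * pi s' a'.

Lemma marg_shift pi mu t s a : marg p pi (step pi mu) t s a = marg p pi mu t.+1 s a.
Proof.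
elim: t s a => [//|t IH] s a /=.
by congr (_ * _); apply: eq_bigr => x _; apply: eq_bigr => b _; rewrite IH.
Qed.

Lemma marg_lin (X : finType) pi (c : X -> R) (mu : X -> S -> A -> R) t s a :
  marg p pi (fun s a => \sum_x c x * mu x s a) t s a =
  \sum_x c x * marg p pi (mu x) t s a.
Proof.
elim: t s a => [//|t IH] s a /=.
under eq_bigr => x _ do under eq_bigr => b _ do rewrite IH mulr_suml.
under eq_bigr => x _ do rewrite exchange_big /=.
rewrite exchange_big /= mulr_suml; apply: eq_bigr => y _.
rewrite mulrA; congr (_ * _); rewrite mulr_sumr.
by apply: eq_bigr => x _; rewrite mulr_sumr; apply: eq_bigr => b _; rewrite !mulrA.
Qed.

Lemma marg_mass pi mu : is_policy pi -> (forall s a, 0 <= mu s a) ->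
  \sum_s \sum_a mu s a = 1 -> forall t,
  (forall s a, 0 <= marg p pi mu t s a) /\ \sum_s \sum_a marg p pi mu t s a = 1.
Proof.
move=> [pi0 pi1] mu0 mu1; elim => [//|t [IH0 IH1]] /=; split.
  move=> s a; apply: mulr_ge0 => //; do 2 apply: sumr_ge0 => ? _.
  by apply: mulr_ge0 => //; case: hp.
under eq_bigr => s _ do rewrite -mulr_sumr pi1 mulr1.
rewrite exchange_big /= -IH1; apply: eq_bigr => s _.
rewrite exchange_big /=; apply: eq_bigr => a _.
by rewrite -mulr_sumr (proj2 hp) mulr1.
Qed.
Variables (gamma : R).
Hypotheses (hg0 : 0 <= gamma) (hg1 : gamma < 1).

Definition term pi mu t := gamma ^+ t * \sum_s \sum_a marg p pi mu t s a * r s a.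

Definition pdist (mu : S -> A -> R) :=
  (forall s a, 0 <= mu s a) /\ \sum_s \sum_a mu s a = 1.

Lemma dr_hs pi mu : is_policy pi -> pdist mu ->
  hs (term pi mu) (disc_return p r gamma pi mu).
Proof.
move=> hpi [m0 m1].
have hm := @marg_mass pi mu hpi m0 m1.
pose M := \sum_s \sum_a `|r s a|.
have hr : forall s a, `|r s a| <= M.
  move=> s a; apply: (le_trans (le_sum1 (fun a => `|r s a|) a _)) => //.
  apply: (le_sum1 (fun s => \sum_a `|r s a|) s) => j.
  exact: sumr_ge0.
have [l hl] : exists l, hs (term pi mu) l.
  apply: (@hs_geo _ _ gamma M) => // t.
  apply: (le_trans (ler_norm_sum _ _ _)).
  apply: (@le_trans _ _ (\sum_s \sum_a marg p pi mu t s a * M)).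
    apply: ler_sum => s _; apply: (le_trans (ler_norm_sum _ _ _)).
    apply: ler_sum => a _; rewrite normrM ger0_norm; last exact: (proj1 (hm t)).
    by apply: ler_wpM2l; [exact: (proj1 (hm t))|].
  have -> : \sum_s \sum_a marg p pi mu t s a * M = (\sum_s \sum_a marg p pi mu t s a) * M.
    by rewrite mulr_suml; apply: eq_bigr => s _; rewrite mulr_suml.
  by rewrite (proj2 (hm t)) mul1r.
by have -> : disc_return p r gamma pi mu = inf_sum (term pi mu) by []; rewrite (hs_inf hl).
Qed.

Lemma dr_lin (X : finType) pi (c : X -> R) (mu : X -> S -> A -> R) :
  is_policy pi -> (forall x, pdist (mu x)) ->
  disc_return p r gamma pi (fun s a => \sum_x c x * mu x s a) =
  \sum_x c x * disc_return p r gamma pi (mu x).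
Proof.
move=> hpi hmu.
have h : hs (fun t => \sum_(x <- index_enum X) c x * term pi (mu x) t)
            (\sum_(x <- index_enum X) c x * disc_return p r gamma pi (mu x)).
  by apply: hs_sum => x; apply: hs_scale; apply: dr_hs.
rewrite -(hs_inf h); congr inf_sum; apply/funext => t.
rewrite /term; under eq_bigr => s _ do under eq_bigr => a _ do rewrite marg_lin mulr_suml.
under eq_bigr => s _ do rewrite exchange_big /=.
rewrite exchange_big /= mulr_sumr; apply: eq_bigr => x _.
rewrite mulrCA; congr (_ * _); rewrite mulr_sumr; apply: eq_bigr => s _.
by rewrite mulr_sumr; apply: eq_bigr => a _; rewrite !mulrA.
Qed.
Lemma sum_ind (I : finType) (F : I -> R) (x : I) :
  \sum_y F y * (if y == x then 1 else 0) = F x.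
Proof.
rewrite (bigD1 x) //= eqxx mulr1 big1 ?addr0 // => y /negbTE ->.
by rewrite mulr0.
Qed.

Lemma sum_ind' (I : finType) (F : I -> R) (x : I) :
  \sum_y F y * (if x == y then 1 else 0) = F x.
Proof. by under eq_bigr => y _ do rewrite eq_sym; apply: sum_ind. Qed.
Arguments sum_ind {I}. Arguments sum_ind' {I}.

Definition dS (s : S) : S -> R := fun s' => if s' == s then 1 else 0.
Definition dSA (s : S) (a : A) : S -> A -> R :=
  fun s' a' => if (s' == s) && (a' == a) then 1 else 0.

Lemma pdist_init rho pi : is_distr rho -> is_policy pi -> pdist (init_sa rho pi).
Proof.
move=> [r0 r1] [p0 p1]; split => [s a|]; first by rewrite /init_sa mulr_ge0.
rewrite -r1; apply: eq_bigr => s _; by rewrite /init_sa -mulr_sumr p1 mulr1.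
Qed.

Lemma distr_dS s : is_distr (dS s).
Proof.
split => [x|]; first by rewrite /dS; case: eqP.
by rewrite -[RHS](sum_ind (fun=> (1:R)) s); apply: eq_bigr => b _; rewrite mul1r.
Qed.

Lemma pdist_dSA s a : pdist (dSA s a).
Proof.
split => [x b|]; first by rewrite /dSA; case: (_ && _).
rewrite (bigD1 s) //=.
have -> : \sum_(y | y != s) \sum_b dSA s a y b = 0.
  by apply: big1 => y /negbTE ys; apply: big1 => b _; rewrite /dSA ys.
rewrite addr0 /dSA eqxx /=.
by rewrite -[RHS](sum_ind (fun=> (1:R)) a); apply: eq_bigr => b _; rewrite mul1r.
Qed.

Lemma V_Q pk s : is_policy pk ->
  Vf p r gamma pk s = \sum_a pk s a * Qf p r gamma pk s a.
Proof.
move=> hpk; rewrite /Vf.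
have -> : init_sa (fun s' => if s' == s then 1 else 0) pk =
          (fun x b => \sum_a pk s a * dSA s a x b).
  apply/funext => x; apply/funext => b; rewrite /init_sa /dSA.
  case: (eqP (x:=x)) => [->|_] /=.
    by rewrite mul1r (sum_ind' (fun a => pk s a)).
  by rewrite mul0r big1 // => a _; rewrite mulr0.
rewrite dr_lin //; move=> a; exact: pdist_dSA.
Qed.

Lemma J_V rho pk : is_distr rho -> is_policy pk ->
  J p r rho gamma pk = \sum_s rho s * Vf p r gamma pk s.
Proof.
move=> hrho hpk; rewrite /J.
have -> : init_sa rho pk = (fun x b => \sum_s rho s * init_sa (dS s) pk x b).
  apply/funext => x; apply/funext => b; rewrite /init_sa /dS.
  under eq_bigr do rewrite mulrA; rewrite -mulr_suml.
  by rewrite (sum_ind' rho).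
rewrite dr_lin //; move=> s; apply: pdist_init => //; exact: distr_dS.
Qed.
Lemma sum2Z (X Y : finType) (c : R) (F : X -> Y -> R) :
  \sum_x \sum_y c * F x y = c * \sum_x \sum_y F x y.
Proof. by rewrite mulr_sumr; apply: eq_bigr => x _; rewrite mulr_sumr. Qed.

Lemma sum3_exch (X Y Z : finType) (F : Z -> X -> Y -> R) :
  \sum_x \sum_y \sum_z F z x y = \sum_z \sum_x \sum_y F z x y.
Proof.
under eq_bigr => x _ do rewrite exchange_big /=.
by rewrite exchange_big.
Qed.

Lemma sum_dSA s a (F : S -> A -> R) :
  \sum_y \sum_c dSA s a y c * F y c = F s a.
Proof.
rewrite (bigD1 s) //=.
have -> : \sum_(y | y != s) \sum_c dSA s a y c * F y c = 0.
  by apply: big1 => y /negbTE ys; apply: big1 => c _; rewrite /dSA ys mul0r.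
rewrite addr0 /dSA eqxx /=; under eq_bigr => c _ do rewrite mulrC.
by rewrite (sum_ind (fun c => F s c)).
Qed.

Lemma Q_bell pk s a : is_policy pk ->
  Qf p r gamma pk s a = r s a + gamma * \sum_s' p s a s' * Vf p r gamma pk s'.
Proof.
move=> hpk.
have hV : forall s', hs (term pk (init_sa (dS s') pk)) (Vf p r gamma pk s').
  move=> s'; apply: dr_hs => //; apply: pdist_init => //; exact: distr_dS.
have h := hs_sum (index_enum S) (fun s' => hs_scale (gamma * p s a s') (hV s')).
have hstep : step pk (dSA s a) = (fun x b => \sum_s' p s a s' * init_sa (dS s') pk x b).
  apply/funext => x; apply/funext => b; rewrite /step /init_sa /dS.
  under [RHS]eq_bigr do rewrite mulrA; rewrite -mulr_suml (sum_ind' (fun y => p s a y)).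
  by congr (_ * _); rewrite (sum_dSA _ _ (fun y c => p y c x)).
have h1 : hs (fun t => term pk (dSA s a) t.+1)
    (\sum_s' gamma * p s a s' * Vf p r gamma pk s').
  apply: hs_ext h => t; rewrite /term.
  under [X in _ = _ * X]eq_bigr => x _ do under eq_bigr => b _ do rewrite -marg_shift hstep marg_lin mulr_suml.
  rewrite [in RHS]sum3_exch exprS -[in RHS]mulrA [in RHS]mulr_sumr; rewrite [in RHS]mulr_sumr; apply: eq_bigr => i _.
  rewrite -!sum2Z; apply: eq_bigr => x _; apply: eq_bigr => b _.
  ring.
have h2 := hs_shift h1.
have -> : Qf p r gamma pk s a = inf_sum (term pk (dSA s a)) by [].
rewrite (hs_inf h2) mulr_sumr; congr (_ + _); last first.
  by apply: eq_bigr => s' _; rewrite mulrA.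
by rewrite /term expr0 mul1r (sum_dSA _ _ r).
Qed.
Section Occ.
Variables (pi : S -> A -> R) (rho : S -> R).
Hypotheses (hpi : is_policy pi) (hrho : is_distr rho).

Definition mst t s := \sum_a marg p pi (init_sa rho pi) t s a.
Definition Dst s := inf_sum (fun t => gamma ^+ t * mst t s).
Definition Pm s s' := \sum_a pi s a * p s a s'.

Lemma margE t s a : marg p pi (init_sa rho pi) t s a = mst t s * pi s a.
Proof.
rewrite /mst; case: t => [|t] /=.
  by rewrite /init_sa -mulr_sumr (proj2 hpi) mulr1.
by rewrite -mulr_sumr (proj2 hpi) mulr1.
Qed.

Lemma mst0 s : mst 0 s = rho s.
Proof. by rewrite /mst /= /init_sa -mulr_sumr (proj2 hpi) mulr1. Qed.

Lemma mst_rec t s' : mst t.+1 s' = \sum_s mst t s * Pm s s'.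
Proof.
rewrite /mst /= -mulr_sumr (proj2 hpi) mulr1; apply: eq_bigr => s _.
rewrite /Pm mulr_sumr; apply: eq_bigr => a _.
by rewrite -/(mst t s) margE mulrA.
Qed.

Lemma mst_bd t s : 0 <= mst t s <= 1.
Proof.
have [h0 h1] := @marg_mass pi (init_sa rho pi) hpi (proj1 (pdist_init hrho hpi))
  (proj2 (pdist_init hrho hpi)) t.
have m0 : forall s, 0 <= mst t s by move=> s'; apply: sumr_ge0.
rewrite m0 /= -h1; apply: (le_sum1 (fun s => mst t s)) => j.
exact: sumr_ge0.
Qed.
Lemma hs_D s : hs (fun t => gamma ^+ t * mst t s) (Dst s).
Proof.
have [l hl] : exists l, hs (fun t => gamma ^+ t * mst t s) l.
  apply: (@hs_geo _ _ gamma 1) => // t.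
  by have /andP[a b] := mst_bd t s; rewrite ger0_norm.
by rewrite /Dst (hs_inf hl).
Qed.

Lemma D_ge0 s : 0 <= Dst s.
Proof.
apply: hs_ge0 (hs_D s) => t; apply: mulr_ge0; first exact: exprn_ge0.
by have /andP[] := mst_bd t s.
Qed.

Lemma Pm_ge0 s s' : 0 <= Pm s s'.
Proof. apply: sumr_ge0 => a _; apply: mulr_ge0; [exact: (proj1 hpi) | exact: (proj1 hp)]. Qed.

Lemma Pm_sum s : \sum_s' Pm s s' = 1.
Proof.
rewrite /Pm exchange_big /= -(proj2 hpi s); apply: eq_bigr => a _.
by rewrite -mulr_sumr (proj2 hp) mulr1.
Qed.

Lemma flow s' : Dst s' = rho s' + gamma * \sum_s Dst s * Pm s s'.
Proof.
have h := hs_sum (index_enum S) (fun s => hs_scale (gamma * Pm s s') (hs_D s)).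
have h1 : hs (fun t => gamma ^+ t.+1 * mst t.+1 s') (\sum_s gamma * Pm s s' * Dst s).
  apply: hs_ext h => t; rewrite mst_rec exprS mulr_sumr.
  by apply: eq_bigr => s _; ring.
have h2 := @hs_shift _ (fun t => gamma ^+ t * mst t s') _ h1.
rewrite /Dst (hs_inf h2) /= expr0 mul1r mst0 mulr_sumr; congr (_ + _).
by apply: eq_bigr => s _; rewrite -/(Dst s); ring.
Qed.

Lemma J_D : J p r rho gamma pi = \sum_s Dst s * \sum_a pi s a * r s a.
Proof.
have h := hs_sum (index_enum S) (fun s => hs_scale (\sum_a pi s a * r s a) (hs_D s)).
have -> : J p r rho gamma pi = inf_sum (term pi (init_sa rho pi)) by [].
have -> : \sum_s Dst s * \sum_a pi s a * r s a = \sum_s (\sum_a pi s a * r s a) * Dst s.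
  by apply: eq_bigr => s _; rewrite mulrC.
rewrite -(hs_inf h); congr inf_sum; apply/funext => t.
rewrite /term mulr_sumr; apply: eq_bigr => s _.
have -> : \sum_a marg p pi (init_sa rho pi) t s a * r s a = mst t s * \sum_a pi s a * r s a.
  by rewrite mulr_sumr; apply: eq_bigr => a _; rewrite margE mulrA.
ring.
Qed.
End Occ.
Lemma PDL pi pk rho : is_policy pi -> is_policy pk -> is_distr rho ->
  J p r rho gamma pi - J p r rho gamma pk =
  \sum_s Dst pi rho s * \sum_a pi s a * Adv p r gamma pk s a.
Proof.
move=> hpi hpk hrho.
set V := Vf p r gamma pk; set D := Dst pi rho.
have e1 : forall s, \sum_a pi s a * Adv p r gamma pk s a =
    \sum_a pi s a * r s a + gamma * \sum_s' Pm pi s s' * V s' - V s.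
  move=> s; rewrite /Adv.
  under eq_bigr => a _ do rewrite Q_bell // mulrBr mulrDr.
  rewrite sumrB big_split /= -/V -mulr_suml (proj2 hpi) mul1r; congr (_ + _ - _).
  transitivity (gamma * \sum_a \sum_s' pi s a * p s a s' * V s').
    rewrite mulr_sumr; apply: eq_bigr => a _.
    rewrite mulrCA; congr (gamma * _); rewrite mulr_sumr; apply: eq_bigr => s' _.
    by rewrite mulrA.
  congr (gamma * _); rewrite exchange_big /=; apply: eq_bigr => s' _.
  by rewrite /Pm mulr_suml.
rewrite (J_D hpi hrho) (J_V hrho hpk) -/D -/V.
under [RHS]eq_bigr => s _ do rewrite e1 mulrBr mulrDr.
rewrite sumrB big_split /=.
have e2 : \sum_s D s * (gamma * \sum_s' Pm pi s s' * V s') =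
          \sum_s' V s' * D s' - \sum_s' rho s' * V s'.
  rewrite -sumrB.
  under [RHS]eq_bigr => s' _ do rewrite /D (flow hpi hrho s') -/D.
  transitivity (gamma * \sum_s \sum_s' D s * Pm pi s s' * V s').
    rewrite mulr_sumr; apply: eq_bigr => s _.
    rewrite mulrCA; congr (gamma * _); rewrite mulr_sumr; apply: eq_bigr => s' _.
    by rewrite mulrA.
  rewrite exchange_big /= mulr_sumr; apply: eq_bigr => s' _.
  rewrite -mulr_suml; ring.
have e3 : \sum_s D s * V s = \sum_s' V s' * D s'.
  by apply: eq_bigr => s _; rewrite mulrC.
rewrite e2 e3; ring.
Qed.
Lemma norm_row (x : S -> R) (Q : S -> S -> R) :
  (forall s s', 0 <= Q s s') -> (forall s, \sum_s' Q s s' = 1) ->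
  \sum_s' `|\sum_s x s * Q s s'| <= \sum_s `|x s|.
Proof.
move=> Q0 Q1.
apply: (@le_trans _ _ (\sum_s' \sum_s `|x s| * Q s s')).
  apply: ler_sum => s' _; apply: (le_trans (ler_norm_sum _ _ _)).
  by apply: ler_sum => s _; rewrite normrM (ger0_norm (Q0 s s')).
rewrite exchange_big /=; apply: ler_sum => s _.
by rewrite -mulr_sumr Q1 mulr1.
Qed.

Lemma Pm_diff pi pi' s : is_policy pi -> is_policy pi' ->
  \sum_s' `|Pm pi s s' - Pm pi' s s'| <= \sum_a `|pi s a - pi' s a|.
Proof.
move=> h1 h2.
apply: (@le_trans _ _ (\sum_s' \sum_a `|pi s a - pi' s a| * p s a s')).
  apply: ler_sum => s' _; rewrite /Pm -sumrB.
  apply: (le_trans (ler_norm_sum _ _ _)); apply: ler_sum => a _.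
  by rewrite -mulrBl normrM (ger0_norm (proj1 hp s a s')).
rewrite exchange_big /=; apply: ler_sum => a _.
by rewrite -mulr_sumr (proj2 hp) mulr1.
Qed.

Lemma occ_diff pi pi' rho : is_policy pi -> is_policy pi' -> is_distr rho ->
  (1 - gamma) * \sum_s `|Dst pi rho s - Dst pi' rho s| <=
  gamma * \sum_s Dst pi' rho s * \sum_a `|pi s a - pi' s a|.
Proof.
move=> h1 h2 hr.
set D1 := Dst pi rho; set D2 := Dst pi' rho.
have eD : forall s', D1 s' - D2 s' = gamma * (\sum_s (D1 s - D2 s) * Pm pi s s' +
     \sum_s D2 s * (Pm pi s s' - Pm pi' s s')).
  move=> s'; rewrite /D1 /D2 (flow h1 hr s') (flow h2 hr s') -/D1 -/D2.
  have -> : \sum_s (D1 s - D2 s) * Pm pi s s' + \sum_s D2 s * (Pm pi s s' - Pm pi' s s')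
      = \sum_s D1 s * Pm pi s s' - \sum_s D2 s * Pm pi' s s'.
    rewrite -big_split -sumrB; apply: eq_bigr => s _; rewrite /=; ring.
  ring.
set N := \sum_s `|D1 s - D2 s|.
set T := \sum_s D2 s * \sum_a `|pi s a - pi' s a|.
have hN : N <= gamma * (N + T).
  rewrite {1}/N; under eq_bigr => s' _ do rewrite eD normrM (ger0_norm hg0).
  rewrite -mulr_sumr; apply: ler_wpM2l => //.
  apply: (@le_trans _ _ (\sum_s' (`|\sum_s (D1 s - D2 s) * Pm pi s s'| +
      `|\sum_s D2 s * (Pm pi s s' - Pm pi' s s')|))).
    by apply: ler_sum => s' _; apply: ler_normD.
  rewrite big_split /=; apply: lerD.
    apply: norm_row; [exact: Pm_ge0 | exact: Pm_sum].
  apply: (@le_trans _ _ (\sum_s' \sum_s D2 s * `|Pm pi s s' - Pm pi' s s'|)).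
    apply: ler_sum => s' _; apply: (le_trans (ler_norm_sum _ _ _)).
    apply: ler_sum => s _; rewrite normrM ger0_norm //; exact: D_ge0.
  rewrite exchange_big /=; apply: ler_sum => s _; rewrite -mulr_sumr.
  apply: ler_wpM2l; first exact: D_ge0.
  exact: Pm_diff.
by rewrite -/N -/T; lra.
Qed.
End MDP.

Lemma le_bigmaxr (R : realType) (I : finType) (F : I -> R) i :
  F i <= \big[Num.max/0]_(j : I) F j.
Proof.
have : forall l, i \in l -> F i <= \big[Num.max/0]_(j <- l) F j.
  elim => [//|x l IH]; rewrite inE big_cons => /orP [/eqP->|/IH h].
    by rewrite le_max lexx.
  by rewrite le_max h orbT.
by apply; exact: mem_index_enum.
Qed.

Arguments le_bigmaxr {R I}.

Lemma bigmaxr_ge0 (R : realType) (I : finType) (F : I -> R) :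
  0 <= \big[Num.max/0]_(j : I) F j.
Proof.
elim: (index_enum I) => [|x l IH]; first by rewrite big_nil.
by rewrite big_cons le_max IH orbT.
Qed.

Unset Implicit Arguments.

Theorem theorem1 (R : realType) (S A : finType)
  (p : S -> A -> S -> R) (r : S -> A -> R) (rho0 : S -> R) (gamma : R)
  (k : nat) (pol : nat -> S -> A -> R) (pi : S -> A -> R) (nu : 'I_k.+1 -> R) :
  is_kernel p -> is_distr rho0 -> 0 <= gamma -> gamma < 1 ->
  is_policy pi -> (forall j, (j <= k)%N -> is_policy (pol j)) ->
  (forall i, 0 <= nu i <= 1) -> \sum_(i < k.+1) nu i = 1 ->
  (forall i : 'I_k.+1, 0 < nu i -> forall s a, pol (k - i)%N s a = 0 -> pi s a = 0) ->
  let Ak := Adv p r gamma (pol k) in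
  let C := \big[Num.max/0]_(s : S) `|\sum_(a : A) pi s a * Ak s a| in
  J p r rho0 gamma pi - J p r rho0 gamma (pol k) >=
    (1 - gamma)^-1 *
      \sum_(i < k.+1) nu i *
        \sum_(s : S) \sum_(a : A)
          (dvis p rho0 gamma (pol (k - i)%N) s * pol (k - i)%N s a) *
          (pi s a / pol (k - i)%N s a * Ak s a)
    - (2 * gamma * C) / (1 - gamma) ^+ 2 *
      \sum_(i < k.+1) nu i *
        \sum_(s : S) dvis p rho0 gamma (pol (k - i)%N) s * TV pi (pol (k - i)%N) s.
Proof.
move=> hp hrho hg0 hg1 hpi hpol hnu hsum hsupp /=.
set Ak := Adv p r gamma (pol k).
set C := \big[Num.max/0]_s `|\sum_a pi s a * Ak s a|.
have hpk := hpol k (leqnn k).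
have g1 : 0 < 1 - gamma by rewrite subr_gt0.
have g1n : 1 - gamma != 0 by rewrite gt_eqF.
set f := fun s => \sum_a pi s a * Ak s a.
set D1 := Dst R S A p gamma pi rho0.
set L := J p r rho0 gamma pi - J p r rho0 gamma (pol k).
have hL : L = \sum_s D1 s * f s by rewrite /L (PDL r hp gamma hg0 hg1 hpi hpk hrho).
have hC : forall s, `|f s| <= C.
  by move=> s; rewrite /C /f; apply: (le_bigmaxr (fun s0 => `|\sum_a pi s0 a * Ak s0 a|) s).
have C0 : 0 <= C by exact: bigmaxr_ge0.
have -> : L = \sum_(i < k.+1) nu i * L by rewrite -mulr_suml hsum mul1r.
rewrite !mulr_sumr -sumrB.
apply: ler_sum => i _.
have [nu0 _] := andP (hnu i).
rewrite [X in X - _]mulrCA [X in _ - X]mulrCA -mulrBr.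
have [nz|nnz] := eqVneq (nu i) 0; first by rewrite nz !mul0r.
have npos : 0 < nu i by rewrite lt_neqAle eq_sym nnz nu0.
apply: ler_wpM2l => //.
set pi' := pol (k - i)%N.
have hpi' : is_policy pi' by apply: hpol; exact: leq_subr.
set D2 := Dst R S A p gamma pi' rho0.
have hd : forall s, dvis p rho0 gamma pi' s = (1 - gamma) * D2 s by [].
set T := \sum_s D2 s * \sum_a `|pi s a - pi' s a|.
set N := \sum_s `|D1 s - D2 s|.
have hX : \sum_s \sum_a dvis p rho0 gamma pi' s * pi' s a * (pi s a / pi' s a * Ak s a)
    = (1 - gamma) * \sum_s D2 s * f s.
  rewrite mulr_sumr; apply: eq_bigr => s _; rewrite /f hd mulr_sumr mulr_sumr.
  apply: eq_bigr => a _.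
  have [z|nz'] := eqVneq (pi' s a) 0.
    by rewrite z (hsupp i npos s a z); ring.
  by field.
have hY : \sum_s dvis p rho0 gamma pi' s * TV pi pi' s = (1 - gamma) * (2^-1 * T).
  rewrite /T mulr_sumr mulr_sumr; apply: eq_bigr => s _; rewrite hd /TV; ring.
have hOcc := occ_diff hp gamma hg0 hg1 hpi hpi' hrho.
rewrite -/D1 -/D2 -/N -/T in hOcc.
have hdiff : \sum_s D2 s * f s - C * N <= \sum_s D1 s * f s.
  have h1 : \sum_s (D2 s - D1 s) * f s <= \sum_s `|D1 s - D2 s| * C.
    apply: ler_sum => s _; apply: (le_trans (ler_norm _)).
    by rewrite normrM distrC; apply: ler_wpM2l.
  have e1 : \sum_s (D2 s - D1 s) * f s = \sum_s D2 s * f s - \sum_s D1 s * f s.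
    by rewrite -sumrB; apply: eq_bigr => s _; ring.
  have e2 : \sum_s `|D1 s - D2 s| * C = C * N by rewrite -mulr_suml mulrC.
  rewrite e1 e2 in h1; lra.
have hCN : C * N <= C * gamma * T / (1 - gamma).
  have hN : N <= gamma * T / (1 - gamma) by rewrite ler_pdivlMr // mulrC.
  by rewrite -!mulrA; apply: ler_wpM2l => //; rewrite mulrA.
rewrite hX hY hL.
have -> : (1 - gamma)^-1 * ((1 - gamma) * \sum_s D2 s * f s) -
    2 * gamma * C / (1 - gamma) ^+ 2 * ((1 - gamma) * (2^-1 * T)) =
    \sum_s D2 s * f s - C * gamma * T / (1 - gamma).
  by field.
lra.
Qed.
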